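(* Let $X$ be a $0$-dimensional, $\mathbb N$-compact space of non-measurable cardinality. Then the evaluation map $\mathcal E:C_p(X,\mathbb Z)\to\widehat{\widehat{C_p(X,\mathbb Z)}}$ is a topological isomorphism of $C_p(X,\mathbb Z)$ onto its image.
   Context: Spaces are Tikhonov; $0$-dimensional means having a base of clopen sets; $\mathbb N$-compact means homeomorphic to a closed subspace of a product of copies of the discrete space $\mathbb N$. $C_p(X,\mathbb Z)$ is the group of continuous functions $X\to\mathbb Z$ ($\mathbb Z$ discrete) with the topology of pointwise convergence. For a topological abelian group $G$, $\widehat G$ is the group of continuous homomorphisms into $\mathbb T=\mathbb R/\mathbb Z$ with the compact-open topology, and $\mathcal E(g)(\chi)=\chi(g)$. *)

(* Defs.v *)
From HB Require Import structures.
From mathcomp Require Import all_boot all_order all_algebra.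
From mathcomp Require Import all_classical all_reals all_analysis.

Set Implicit Arguments.
Unset Strict Implicit.
Unset Printing Implicit Defensive.
Import Order.TTheory GRing.Theory Num.Theory.
Local Open Scope classical_set_scope.
Local Open Scope ring_scope.

Definition clopen_base_space (X : topologicalType) : Prop :=
  forall (U : set X) (x : X), open U -> U x ->
    exists V : set X, [/\ open V, closed V, V x & V `<=` U].

(* N-compact: homeomorphic to a closed subspace of a product N^I of copies of
   the discrete space N.  Written out: e : X -> (I -> nat) is injective,
   continuous (each coordinate is continuous into discrete N), open onto its
   image (for the product topology, whose basic open sets are the cylinders
   fixing finitely many coordinates), and its image is closed in N^I. *)
Definition N_compact (X : topologicalType) : Prop :=
  exists (I : Type) (e : X -> I -> nat),
    [/\ injective e,
        (forall (i : I) (n : nat), open [set x | e x i = n]),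
        (forall (U : set X) (x : X), open U -> U x ->
           exists F : set I, finite_set F /\
             (forall y, (forall i, F i -> e y i = e x i) -> U y)) &
        (forall g : I -> nat,
           (forall F : set I, finite_set F ->
              exists x, forall i, F i -> e x i = g i) ->
           exists x, e x = g)].

(* Ulam-measurable cardinality: the set admits a free countably complete
   ultrafilter (equivalently a non-trivial {0,1}-valued countably additive
   measure on all subsets vanishing on singletons). *)
Definition measurable_cardinality (T : Type) : Prop :=
  exists U : set (set T),
    [/\ ~ U set0,
        (forall A B : set T, U A -> A `<=` B -> U B),
        (forall A : set T, U A \/ U (~` A)),
        (forall F : nat -> set T, (forall n, U (F n)) -> U (\bigcap_n F n)) &
        (forall x : T, ~ U [set x])].

(* A group given by an ambient type, the subset of actual group elements, the
   addition, and the open sets (a set W is open when W restricted to the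
   group elements is open; points outside the carrier are ignored). *)
Record tgroup := TGroup {
  tg_car : Type;
  tg_set : set tg_car;
  tg_add : tg_car -> tg_car -> tg_car;
  tg_open : set tg_car -> Prop }.
Arguments tg_set : clear implicits.
Arguments tg_add : clear implicits.
Arguments tg_open : clear implicits.

(* topology on the subset C of A generated by the subbase S *)
Definition gen_open (A : Type) (C : set A) (S : set (set A)) (W : set A) : Prop :=
  forall a, C a -> W a ->
    exists Fs : set (set A),
      [/\ finite_set Fs, Fs `<=` S, (forall V, Fs V -> V a) &
          (forall b, C b -> (forall V, Fs V -> V b) -> W b)].

Definition tg_compact (G : tgroup) (K : set (tg_car G)) : Prop :=
  K `<=` tg_set G /\
  forall Us : set (set (tg_car G)), (forall U, Us U -> tg_open G U) ->
    K `<=` \bigcup_(U in Us) U ->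
    exists Fs : set (set (tg_car G)),
      [/\ finite_set Fs, Fs `<=` Us & K `<=` \bigcup_(U in Fs) U].

(* ---------- The circle group T = R/Z, represented by [0,1) ---------- *)

Definition tfrac (R : realType) (x : R) : R := x - (Num.floor x)%:~R.
Definition tadd (R : realType) (x y : R) : R := tfrac (x + y).
Definition in_T (R : realType) (t : R) : Prop := 0 <= t < 1.
(* quotient metric of R/Z *)
Definition tdist (R : realType) (x y : R) : R :=
  Num.min `|x - y| (1 - `|x - y|).
Definition T_open (R : realType) (U : set R) : Prop :=
  forall t, in_T t -> U t ->
    exists2 e : R, 0 < e & forall s, in_T s -> tdist t s < e -> U s.

Definition character (R : realType) (G : tgroup) (chi : tg_car G -> R) : Prop :=
  [/\ forall g, tg_set G g -> in_T (chi g),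
      forall g, ~ tg_set G g -> chi g = 0,
      forall g h, tg_set G g -> tg_set G h ->
                  chi (tg_add G g h) = tadd (chi g) (chi h) &
      forall U : set R, T_open U -> tg_open G (chi @^-1` U)].

Definition co_subbase (R : realType) (G : tgroup) : set (set (tg_car G -> R)) :=
  [set W | exists (K : set (tg_car G)) (U : set R),
     [/\ @tg_compact G K, T_open U & W = [set chi | forall g, K g -> U (chi g)]]].

Definition Dual (R : realType) (G : tgroup) : tgroup :=
  @TGroup (tg_car G -> R) (@character R G)
    (fun chi psi g => tadd (chi g) (psi g))
    (gen_open (@character R G) (@co_subbase R G)).

Definition evalE (R : realType) (G : tgroup) (g : tg_car G) :
  tg_car (Dual R (Dual R G)) :=
  fun chi => if `[< @character R G chi >] then chi g else 0.

Arguments character : clear implicits.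
Definition top_iso_onto_image (G H : tgroup) (f : tg_car G -> tg_car H) : Prop :=
  [/\ forall g, tg_set G g -> tg_set H (f g),
      forall g h, tg_set G g -> tg_set G h -> f (tg_add G g h) = tg_add H (f g) (f h),
      forall g h, tg_set G g -> tg_set G h -> f g = f h -> g = h,
      forall W, tg_open H W -> tg_open G (f @^-1` W) &
      forall U, tg_open G U ->
        exists2 W, tg_open H W & forall g, tg_set G g -> (U g <-> W (f g))].

Definition cont_Z (X : topologicalType) (f : X -> int) : Prop :=
  forall n : int, open [set x | f x = n].

(* pointwise topology: subbase {f | f x = n} *)
Definition Cp_Z (X : topologicalType) : tgroup :=
  @TGroup (X -> int) (@cont_Z X) (fun f g x => f x + g x)
    (gen_open (@cont_Z X)
       [set W | exists (x : X) (n : int), W = [set f | f x = n]]).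

(* Main.v *)
Require Import Defs.
From mathcomp Require Import all_boot all_order all_algebra.
From mathcomp Require Import all_classical all_reals all_analysis.
From mathcomp Require Import ring lra zify.
Import Order.TTheory GRing.Theory Num.Theory.
Set Implicit Arguments.
Unset Strict Implicit.
Unset Printing Implicit Defensive.
Local Open Scope classical_set_scope.
Local Open Scope ring_scope.
Section TFrac.
Variable R : realType.
Implicit Types x y : R.

Lemma tfrac_itv x : 0 <= tfrac x < 1.
Proof.
rewrite /tfrac; have /andP[h1 h2] := floor_itv x.
rewrite intrD in h2; apply/andP; split; lra.
Qed.

Lemma tfrac_inT x : in_T (tfrac x).
Proof. exact: tfrac_itv. Qed.

Lemma tfrac_id x : 0 <= x < 1 -> tfrac x = x.
Proof.
move=> h; by rewrite /tfrac (@floor_def _ x 0) ?subr0 //.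
Qed.

Lemma tfracDz x (k : int) : tfrac (x + k%:~R) = tfrac x.
Proof.
rewrite /tfrac floorDrz ?intr_int // intrKfloor intrD; lra.
Qed.

Lemma tfracDl x y : tfrac (tfrac x + y) = tfrac (x + y).
Proof.
rewrite /tfrac -/(tfrac _).
have -> : x - (Num.floor x)%:~R + y = (x + y) + (- Num.floor x)%:~R.
  by rewrite intrN; lra.
by rewrite tfracDz.
Qed.

Lemma tfracDr x y : tfrac (x + tfrac y) = tfrac (x + y).
Proof. by rewrite addrC tfracDl addrC. Qed.

Lemma tfrac_int (k : int) : tfrac k%:~R = 0 :> R.
Proof. by rewrite /tfrac intrKfloor subrr. Qed.

Lemma tfrac0 : tfrac 0 = 0 :> R.
Proof. by rewrite tfrac_id //; apply/andP; split. Qed.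

Lemma tfrac_eq0 x : tfrac x = 0 -> x = (Num.floor x)%:~R.
Proof. by rewrite /tfrac => /eqP; rewrite subr_eq0 => /eqP. Qed.

Lemma tfrac_half_small x : `|x| < 1/2 -> tfrac x != 1/2.
Proof.
move=> hx; apply/eqP; rewrite /tfrac => h.
have hf : x = (Num.floor x)%:~R + 1/2 by rewrite -h; lra.
set z := Num.floor x in hf.
move: hx; rewrite ltr_norml => /andP[h1 h2].
have a1 : (z%:~R : R) < 0 by lra.
have a2 : ((-1)%:~R : R) < z%:~R by rewrite (_ : (-1)%:~R = -1 :> R) //; lra.
rewrite ltrz0 in a1; rewrite ltr_int in a2.
by case: z {hf h} a1 a2 => [[|n]|n].
Qed.
End TFrac.
Lemma fin_list (T : Type) (Fs : set (set T)) :
  finite_set Fs -> exists s : seq (set T), forall V, Fs V <-> V \in s.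
Proof. by move=> /finite_seqP[s ->]; exists s. Qed.

Lemma gen_open_sub (A : Type) (C : set A) (S : set (set A)) (W : set A) :
  S W -> gen_open C S W.
Proof.
move=> SW a Ca Wa; exists [set W]; split.
- exact: finite_set1.
- by move=> V ->.
- by move=> V ->.
- by move=> b Cb /(_ W erefl).
Qed.

Lemma evt_list (A : Type) (y : nat -> A) (P : set A -> Prop) (s : seq (set A)) :
  (forall V, V \in s -> exists M, forall m, (M <= m)%N -> V (y m)) ->
  exists M, forall m, (M <= m)%N -> forall V, V \in s -> V (y m).
Proof.
elim: s => [|V s IH] h; first by exists 0%N.
have [M1 h1] := h V (mem_head _ _).
have [M2 h2] : exists M, forall m, (M <= m)%N -> forall V, V \in s -> V (y m).
  by apply: IH => W Ws; apply: h; rewrite in_cons Ws orbT.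
exists (maxn M1 M2) => m hm W; rewrite in_cons => /orP[/eqP->|Ws].
  by apply: h1; apply: leq_trans hm; apply: leq_maxl.
by apply: h2 => //; apply: leq_trans hm; apply: leq_maxr.
Qed.

Lemma seq_compact (A : Type) (C : set A) (S : set (set A)) (y : nat -> A)
    (yinf : A) (N : nat) :
  (forall V, S V -> V yinf -> exists M, forall m, (M <= m)%N -> V (y m)) ->
  forall Us : set (set A), (forall U, Us U -> gen_open C S U) ->
  C yinf -> (forall m, C (y m)) ->
  [set a | a = yinf \/ exists2 m, (N <= m)%N & a = y m] `<=` \bigcup_(U in Us) U ->
  exists Fs : set (set A),
      [/\ finite_set Fs, Fs `<=` Us &
          [set a | a = yinf \/ exists2 m, (N <= m)%N & a = y m]
            `<=` \bigcup_(U in Fs) U].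
Proof.
move=> hconv Us hUs Cy Cym hcov.
have [U0 Us0 U0y] := hcov yinf (or_introl erefl).
have [Fs0 [fin0 sub0 in0 imp0]] := hUs U0 Us0 yinf Cy U0y.
have [s hs] := fin_list fin0.
have [M hM] : exists M, forall m, (M <= m)%N -> forall V, V \in s -> V (y m).
  apply: (@evt_list _ _ (fun _ => True)) => V /hs FV.
  by apply: hconv; [apply: sub0 | apply: in0].
have [Uf hUf] : {Uf : nat -> set A & forall m, Us (Uf m) /\ ((N <= m)%N -> Uf m (y m))}.
  have h : forall m, exists U, Us U /\ ((N <= m)%N -> U (y m)).
    move=> m; case: (leqP N m) => hm.
      have [U UsU Uy] : (\bigcup_(U in Us) U) (y m) by apply: hcov; right; exists m.
      by exists U.
    by exists U0; split => //; rewrite leqNgt hm.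
  exact: choice h.
exists [set` (U0 :: [seq Uf m | m <- iota 0 M])]; split.
- exact: finite_seq.
- move=> V /=; rewrite in_cons => /orP[/eqP->//|/mapP[m _ ->]].
  by case: (hUf m).
- move=> a [->|[m hm ->]].
    by exists U0 => //=; rewrite mem_head.
  case: (leqP M m) => hMm.
    exists U0; first by rewrite /= mem_head.
    apply: imp0 => // V /hs; exact: hM.
  exists (Uf m); last by case: (hUf m) => _; apply.
  by rewrite /= in_cons; apply/orP; right; apply/mapP; exists m => //; rewrite mem_iota.
Qed.
Section CpZ.
Variable R : realType.
Variable X : topologicalType.

Definition zf : X -> int := fun _ => 0.
Local Notation cont := (@cont_Z X).
Local Notation CHI := (character R (Cp_Z X)).

Lemma cont_op2 (op : int -> int -> int) f g : cont f -> cont g ->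
  cont (fun x => op (f x) (g x)).
Proof.
move=> cf cg n.
have -> : [set x | op (f x) (g x) = n] =
  \bigcup_(p in [set p : int * int | op p.1 p.2 = n])
     ([set x | f x = p.1] `&` [set x | g x = p.2]).
  apply/seteqP; split => x /=.
    by move=> h; exists (f x, g x).
  by move=> [p /= hp [-> ->]].
by apply: bigcup_open => p _; apply: openI.
Qed.

Lemma cont_op1 (u : int -> int) f : cont f -> cont (fun x => u (f x)).
Proof. by move=> cf; apply: (@cont_op2 (fun a _ => u a) f f). Qed.

Lemma cont_cst (c : int) : cont (fun _ => c).
Proof.
move=> n; case: (eqVneq c n) => [->|hne].
  have -> : [set _ : X | n = n] = setT by apply/seteqP; split.
  exact: openT.
have -> : [set _ : X | c = n] = set0.
  by apply/seteqP; split => x //= h; move: hne; rewrite h eqxx.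
exact: open0.
Qed.

Definition V0 : set R := [set t | t < 1/4 \/ 3/4 < t].

Lemma tdist_sym (a b : R) : tdist a b = tdist b a.
Proof. by rewrite /tdist distrC. Qed.

Lemma tdist_ltP (a b e : R) : tdist a b < e -> `|a - b| < e \/ 1 - `|a - b| < e.
Proof. by rewrite /tdist gt_min => /orP. Qed.

Lemma V0_open : T_open V0.
Proof.
move=> t /andP[t0 t1] ht.
have [e e0 he] : exists2 e, 0 < e & (t < 1/4 -> e <= 1/4 - t) /\ (3/4 < t -> e <= t - 3/4).
  by case: ht => ht; [exists (1/4 - t) | exists (t - 3/4)]; try lra; split => h; lra.
exists e => // s /andP[s0 s1] /tdist_ltP h; rewrite /V0 /=.
case: he => he1 he2.
have hn : (0 <= t - s /\ `|t - s| = t - s) \/ (t - s < 0 /\ `|t - s| = s - t).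
  by case: (lerP 0 (t - s)) => hts; [left; rewrite ger0_norm | right; rewrite ltr0_norm //; split => //; lra].
case: ht => ht; [have := he1 ht | have := he2 ht] => hle;
case: hn => -[hs hn]; rewrite hn in h; case: h => h; first [left; lra | right; lra].
Qed.
End CpZ.
Arguments V0 {R}.
Section Chars.
Variable R : realType.
Variable X : topologicalType.
Local Notation cont := (@cont_Z X).
Local Notation CHI := (character R (Cp_Z X)).

Lemma small_bad (c : R) : 0 < c < 1/4 -> exists j : int, ~ V0 (tfrac (j%:~R * c)).
Proof.
move=> /andP[c0 c1].
set x := 1 / (4 * c).
have cx : x * c = 1/4 by rewrite /x; field; lra.
set n := Num.floor x.
have hn1 : (n%:~R : R) <= x by apply: floor_le.
have hn2 : x < (n + 1)%:~R by apply: floorD1_gt.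
have x0 : 0 < x by rewrite /x; apply: divr_gt0; lra.
exists (n + 1); rewrite intrD mulrDl mul1r.
have a1 : n%:~R * c <= x * c by apply: ler_wpM2r => //; lra.
have a2 : x * c < (n + 1)%:~R * c by rewrite ltr_pM2r.
rewrite intrD mulrDl mul1r in a2.
rewrite tfrac_id; last by apply/andP; split; lra.
rewrite /V0 /= => -[]; lra.
Qed.

Lemma tfracN_tfrac (y : R) : tfrac (- tfrac y) = tfrac (- y).
Proof. by rewrite {2}/tfrac opprB addrC tfracDz. Qed.

Lemma real_bad (c : R) : 0 < c < 1 -> exists j : int, ~ V0 (tfrac (j%:~R * c)).
Proof.
move=> /andP[c0 c1].
case: (ltrP c (1/4)) => h1.
  by apply: small_bad; apply/andP; split.
case: (lerP c (3/4)) => h2.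
  exists 1; rewrite mul1r tfrac_id; last by apply/andP; split; lra.
  by rewrite /V0 /= => -[]; lra.
have [j hj] := @small_bad (1 - c) ltac:(apply/andP; split; lra).
exists (- j); move: hj.
have -> : j%:~R * (1 - c) = (- j)%:~R * c + j%:~R by rewrite intrN; ring.
by rewrite tfracDz.
Qed.

Variable chi : (X -> int) -> R.
Hypothesis hchi : CHI chi.

Lemma chi_itv f : cont f -> 0 <= chi f < 1.
Proof. by case: hchi => h _ _ _; apply: h. Qed.

Lemma chi_add f g : cont f -> cont g -> chi (fun x => f x + g x) = tfrac (chi f + chi g).
Proof. by case: hchi => _ _ h _; apply: h. Qed.

Lemma cont_zf : cont (fun _ => 0).
Proof. exact: cont_cst. Qed.

Lemma chi0 : chi (fun _ => 0) = 0.
Proof.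
have := chi_add cont_zf cont_zf.
have -> : (fun _ : X => (0 : int) + 0) = (fun _ => 0) by apply: funext => x; rewrite addr0.
have /andP[h0 h1] := chi_itv cont_zf.
move: h0 h1; set c := chi _ => h0 h1 e.
have hc : c = (Num.floor (c + c))%:~R by move: e; rewrite /tfrac => e; lra.
move: h0 h1; rewrite hc; set z := Num.floor (c + c) => h0 h1.
rewrite (ler0z R) in h0; rewrite (_ : (1 : R) = 1%:~R) // ltr_int in h1.
by case: z {hc e} h0 h1 => [[|n]|n].
Qed.

Lemma chi_neg f : cont f -> chi (fun x => - f x) = tfrac (- chi f).
Proof.
move=> cf; have cn : cont (fun x => - f x) by apply: cont_op1.
have := chi_add cf cn.
have -> : (fun x => f x + - f x) = (fun _ => 0) by apply: funext => x; rewrite subrr.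
rewrite chi0 => /esym /tfrac_eq0 e.
have /andP[h0 h1] := chi_itv cn.
have -> : - chi f = chi (fun x => - f x) + (- Num.floor (chi f + chi (fun x => - f x)))%:~R.
  by rewrite intrN -e; ring.
by rewrite tfracDz tfrac_id //; apply/andP.
Qed.

Lemma chi_mulz (j : int) f : cont f -> chi (fun x => j * f x) = tfrac (j%:~R * chi f).
Proof.
move=> cf.
have hnat : forall n : nat, chi (fun x => n%:Z * f x) = tfrac (n%:~R * chi f).
  elim => [|n IH].
    have -> : (fun x => 0%:Z * f x) = (fun _ => 0) by apply: funext => x; rewrite mul0r.
    by rewrite chi0 mul0r tfrac0.
  have -> : (fun x => n.+1%:Z * f x) = (fun x => n%:Z * f x + f x).
    by apply: funext => x; rewrite intS mulrDl mul1r addrC.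
  rewrite chi_add //; last by apply: cont_op1.
  by rewrite IH tfracDl intS intrD; congr tfrac; ring.
case: j => n; first exact: hnat.
have -> : (fun x => Negz n * f x) = (fun x => - (n.+1%:Z * f x)).
  by apply: funext => x; rewrite NegzE mulNr.
rewrite chi_neg; last by apply: cont_op1.
by rewrite hnat tfracN_tfrac NegzE intrN mulNr.
Qed.

Lemma chi_triv f : cont f -> (forall j : int, V0 (chi (fun x => j * f x))) -> chi f = 0.
Proof.
move=> cf hV; case: (eqVneq (chi f) 0) => // hne; exfalso.
have /andP[h0 h1] := chi_itv cf.
have hc : 0 < chi f < 1 by rewrite lt_def hne h0 h1.
have [j hj] := real_bad hc.
by apply: hj; rewrite -chi_mulz //; apply: hV.
Qed.
End Chars.
Section Supp.
Variable R : realType.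
Variable X : topologicalType.
Local Notation cont := (@cont_Z X).
Local Notation CHI := (character R (Cp_Z X)).

Definition supp (chi : (X -> int) -> R) (F : seq X) :=
  forall f, cont f -> (forall x, x \in F -> f x = 0) -> chi f = 0.

Lemma pts_list (s : seq (set (X -> int))) :
  (forall V, V \in s -> exists x, V = [set f | f x = 0]) ->
  exists F : seq X, forall f, (forall x, x \in F -> f x = 0) -> forall V, V \in s -> V f.
Proof.
elim: s => [|V s IH] h; first by exists [::].
have [x hx] := h V (mem_head _ _).
have [F hF] : exists F : seq X, forall f, (forall x, x \in F -> f x = 0) -> forall V, V \in s -> V f.
  by apply: IH => W Ws; apply: h; rewrite in_cons Ws orbT.
exists (x :: F) => f hf W; rewrite in_cons => /orP[/eqP->|Ws].
  by rewrite hx /=; apply: hf; rewrite mem_head.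
by apply: hF => // y yF; apply: hf; rewrite in_cons yF orbT.
Qed.

Variable chi : (X -> int) -> R.
Hypothesis hchi : CHI chi.

Lemma supp_exists : exists F, supp chi F.
Proof.
have hc : tg_open (Cp_Z X) (chi @^-1` V0) by case: hchi => _ _ _; apply; exact: V0_open.
have z0 : V0 (chi (fun _ => 0)) by rewrite (chi0 hchi); left; lra.
have [Fs [fin sub inn imp]] := hc (fun _ => 0) (@cont_zf X) z0.
have [s hs] := fin_list fin.
have hpts : forall V, V \in s -> exists x, V = [set f : X -> int | f x = 0].
  move=> V /hs FV; have [x [n hV]] := sub V FV.
  have := inn V FV; rewrite hV /= => n0; exists x; by rewrite -n0.
have [F hF] := pts_list hpts.
exists F => f cf hf; apply: (chi_triv hchi cf) => j.
apply: (imp (fun x => j * f x)); first exact: cont_op1.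
move=> V /hs Vs; apply: hF => // x xF; by rewrite hf // mulr0.
Qed.

Lemma supp_agree F f g : supp chi F -> cont f -> cont g ->
  (forall x, x \in F -> f x = g x) -> chi f = chi g.
Proof.
move=> hF cf cg hfg.
have cd : cont (fun x => f x - g x) by exact: (@cont_op2 _ (fun a b => a - b) f g cf cg).
have -> : chi f = chi (fun x => (f x - g x) + g x).
  by congr chi; apply: funext => x; rewrite subrK.
rewrite (chi_add hchi cd cg) (hF _ cd); last by move=> x xF; rewrite hfg // subrr.
by rewrite add0r tfrac_id //; apply: chi_itv.
Qed.

Lemma supp_sub F F' : supp chi F -> {subset F <= F'} -> supp chi F'.
Proof. by move=> hF sub f cf hf; apply: hF => // x /sub; apply: hf. Qed.

Lemma supp_min : exists F, supp chi F /\
  forall a, a \in F -> ~ supp chi ([seq y <- F | y != a]).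
Proof.
have [F0 hF0] := supp_exists.
suff : forall n F, (size F <= n)%N -> supp chi F -> exists F, supp chi F /\
  forall a, a \in F -> ~ supp chi ([seq y <- F | y != a]) by move/(_ _ F0 (leqnn _) hF0).
elim => [|n IH] F hsz hF.
  exists F; split => // a; by case: F hsz {hF}.
case: (pselect (exists2 a, a \in F & supp chi ([seq y <- F | y != a]))) => [[a aF ha]|hno].
  apply: (IH _ _ ha); rewrite size_filter.
  have := count_predC (fun y => y != a) F.
  have : (0 < count (predC (fun y => y != a)) F)%N.
    by rewrite -has_count; apply/hasP; exists a => //=; rewrite negbK.
  move: hsz; set c1 := count _ F; set c2 := count _ F; move=> h1 h2 h3.
  by rewrite -ltnS; apply: leq_trans h1; rewrite -h3 -[X in (X < _)%N]addn0 ltn_add2l.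
exists F; split => // a aF ha; apply: hno; by exists a.
Qed.
End Supp.
Section Topo.
Variable X : topologicalType.
Hypothesis hH : hausdorff_space X.
Hypothesis hC : clopen_base_space X.

Lemma open_notin (F : seq X) : open [set x | x \notin F].
Proof.
elim: F => [|a F IH].
  by rewrite (_ : [set x : X | x \notin [::]] = setT); [exact: openT | apply/seteqP; split].
have -> : [set x | x \notin a :: F] = ~` [set a] `&` [set x | x \notin F].
  apply/seteqP; split => x /=; rewrite in_cons negb_or.
    by move=> /andP[/eqP h1 h2].
  by move=> [/eqP h1 h2]; rewrite h1.
apply: openI => //; apply: closed_openC; apply: accessible_closed_set1.
exact: hausdorff_accessible.
Qed.

Lemma clopen_sep (O : set X) p (F : seq X) : open O -> O p -> p \notin F ->
  exists V : set X, [/\ open V, closed V, V p, V `<=` O & forall x, x \in F -> ~ V x].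
Proof.
move=> oO Op pF.
have [V [oV cV Vp VU]] := hC (openI oO (open_notin F)) (conj Op pF).
exists V; split => // [x /VU [] // | x xF /VU [_ /negP]] //.
Qed.

Definition ind (V : set X) : X -> int := fun x => if `[< V x >] then 1 else 0.

Lemma cont_ind V : open V -> closed V -> cont_Z (ind V).
Proof.
move=> oV cV n; rewrite /ind.
case: (eqVneq n 1) => [->|n1].
  have -> : [set x : X | (if `[< V x >] then 1 else 0) = 1 :> int] = V.
    by apply/seteqP; split => x /=; case: asboolP.
  exact: oV.
case: (eqVneq n 0) => [->|n0].
  have -> : [set x : X | (if `[< V x >] then 1 else 0) = 0 :> int] = ~` V.
    by apply/seteqP; split => x /=; case: asboolP.
  by rewrite openC.
have -> : [set x : X | (if `[< V x >] then 1 else 0) = n :> int] = set0.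
  apply/seteqP; split => x //=; case: asboolP => _ h.
    by move: n1; rewrite -h eqxx.
  by move: n0; rewrite -h eqxx.
exact: open0.
Qed.

Lemma ind_in V x : V x -> ind V x = 1.
Proof. by rewrite /ind; case: asboolP. Qed.
Lemma ind_out V x : ~ V x -> ind V x = 0.
Proof. by rewrite /ind; case: asboolP. Qed.
End Topo.
Section DisjSeq.
Variable X : topologicalType.
Hypothesis hH : hausdorff_space X.
Hypothesis hC : clopen_base_space X.
Variable A : set X.

Definition inf (B : set X) := forall s : seq X, exists b, B b /\ b \notin s.

Definition spec (O : set X) (t : X * set X * set X) :=
  [/\ A t.1.1 /\ t.1.2 t.1.1, open t.1.2 /\ closed t.1.2, t.1.2 `<=` O /\ t.2 `<=` O,
      open t.2 /\ closed t.2 &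
      (forall x, t.1.2 x -> ~ t.2 x) /\ inf (A `&` t.2)].

Lemma closed_setI (B D : set X) : closed B -> closed D -> closed (B `&` D).
Proof. by move=> cB cD; apply: closedI. Qed.

Lemma step O : open O -> closed O -> inf (A `&` O) -> exists t, spec O t.
Proof.
move=> oO cO hi.
have [p [[Ap Op] _]] := hi [::].
have [q [[Aq Oq] qp]] := hi [:: p].
have pq : p \notin [:: q] by rewrite inE eq_sym; rewrite inE in qp.
have [V [oV cV Vp VO Vq]] := clopen_sep hH hC oO Op pq.
have nVq : ~ V q by apply: Vq; rewrite mem_head.
case: (pselect (inf (A `&` V))) => hV.
  exists (q, O `&` ~` V, V); split => /=.
  - by split => //; split.
  - by split; [apply: openI => //; exact: closed_openC | apply: closed_setI => //; exact: open_closedC].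
  - by split => [x []|].
  - by split.
  - by split => // x [_ ?].
have [s1 hs1] : exists s1 : seq X, forall b, A b -> V b -> b \in s1.
  apply: contrapT => hne; apply: hV => s; apply: contrapT => hne2; apply: hne.
  exists s => b Ab Vb; apply: contrapT => /negP bs; apply: hne2; by exists b.
exists (p, V, O `&` ~` V); split => /=.
- by split.
- by split.
- by split => [//|x []].
- by split; [apply: openI => //; exact: closed_openC | apply: closed_setI => //; exact: open_closedC].
- split; first by move=> x Vx [].
  move=> s; have [b [[Ab Ob] bs]] := hi (s ++ s1).
  rewrite mem_cat negb_or in bs; case/andP: bs => bs bs1.
  exists b; split => //; split => //; split => // Vb.
  by move: bs1; rewrite hs1.
Qed.

Lemma disj_seq : inf A -> exists (a : nat -> X) (C : nat -> set X), forall m,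
  [/\ A (a m), C m (a m), open (C m), closed (C m) &
      forall m', m' != m -> forall x, C m x -> ~ C m' x].
Proof.
move=> hA.
have [x0 _] := hA [::].
have h : forall O, exists t, (open O /\ closed O /\ inf (A `&` O)) -> spec O t.
  move=> O; case: (pselect (open O /\ closed O /\ inf (A `&` O))) => [hyp|hn].
    by case: hyp => ho [c ii]; have [t ht] := step ho c ii; exists t.
  by exists (x0, set0, set0).
have [sf hsf] := choice h.
pose Os := fun n => iter n (fun O => (sf O).2) setT.
have inv : forall n, open (Os n) /\ closed (Os n) /\ inf (A `&` Os n).
  elim => [ | n [ho [c ii] ] ].
    split; first exact: openT.
    split; first exact: closedT.
    by rewrite /Os /= setIT.
  have [_ _ _ [ho' c'] [_ i2]] := hsf _ (conj ho (conj c ii)).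
  by rewrite /Os /=; split.
have sp : forall n, spec (Os n) (sf (Os n)).
  by move=> n; have [ho [c ii]] := inv n; apply: hsf.
have mono : forall m k, (m <= k)%N -> Os k `<=` Os m.
  move=> m k; elim: k => [|k IH].
    by rewrite leqn0 => /eqP ->.
  rewrite leq_eqVlt => /orP[/eqP -> //|]; rewrite ltnS => /IH hk x hx.
  apply: hk; have [_ _ [_ sub] _ _] := sp k; exact: sub.
exists (fun n => (sf (Os n)).1.1), (fun n => (sf (Os n)).1.2) => m.
have [[Am Cm] [oC cC] _ _ _] := sp m.
split => // m' hm' x.
have key : forall i j, (i < j)%N -> forall x, (sf (Os i)).1.2 x -> ~ (sf (Os j)).1.2 x.
  move=> i j ij y hi hj.
  have [_ _ [Cj _] _ _] := sp j.
  have [_ _ _ _ [dis _]] := sp i.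
  apply: (dis y hi); apply: (mono i.+1 j) => //; exact: Cj.
case: (ltngtP m m') => [mm'|m'm|e]; first exact: key.
  by move=> hx hx'; apply: (key _ _ m'm x hx').
by move: hm'; rewrite e eqxx.
Qed.
End DisjSeq.
Section Key.
Variable R : realType.
Variable X : topologicalType.
Hypothesis hH : hausdorff_space X.
Hypothesis hC : clopen_base_space X.
Local Notation cont := (@cont_Z X).
Local Notation CHI := (character R (Cp_Z X)).
Local Notation DG := (Dual R (Cp_Z X)).

Lemma bump chi F a (O : set X) : CHI chi -> supp chi F -> a \in F ->
  ~ supp chi [seq y <- F | y != a] -> open O -> O a ->
  exists h, [/\ cont h, (forall x, ~ O x -> h x = 0) & ~ V0 (chi h)].
Proof.
move=> hchi hF aF hmin oO Oa.
have [h0 [c0 v0 n0]] : exists h0, [/\ cont h0, (forall x, x \in [seq y <- F | y != a] -> h0 x = 0) & chi h0 <> 0].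
  apply: contrapT => hn; apply: hmin => f cf hf; apply: contrapT => hne.
  by apply: hn; exists f.
have anF : a \notin [seq y <- F | y != a] by rewrite mem_filter eqxx.
have [V [oV cV Va VO Vn]] := clopen_sep hH hC oO Oa anF.
pose h1 := fun x => h0 x * ind V x.
have c1 : cont h1 by apply: (@cont_op2 _ (fun u v => u * v)) => //; apply: cont_ind.
have e1 : chi h1 = chi h0.
  apply: (supp_agree hchi hF c1 c0) => x xF.
  case: (eqVneq x a) => [->|xa]; first by rewrite /h1 ind_in // mulr1.
  have xf : x \in [seq y <- F | y != a] by rewrite mem_filter xa.
  by rewrite /h1 (v0 _ xf) mul0r.
have [j hj] : exists j : int, ~ V0 (chi (fun x => j * h1 x)).
  apply: contrapT => hn; apply: n0; rewrite -e1; apply: (chi_triv hchi c1) => j.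
  by apply: contrapT => hv; apply: hn; exists j.
exists (fun x => j * h1 x); split => //; first exact: cont_op1.
move=> x Ox; rewrite /h1 ind_out ?mulr0 //; by move=> /VO.
Qed.

Lemma evt_notin (C : nat -> set X) :
  (forall m m', m' != m -> forall x, C m x -> ~ C m' x) ->
  forall S : seq X, exists N, forall m, (N <= m)%N -> forall x, x \in S -> ~ C m x.
Proof.
move=> dis; elim => [|x S [N hN]]; first by exists 0%N.
have [Nx hNx] : exists Nx, forall m, (Nx <= m)%N -> ~ C m x.
  case: (pselect (exists m0, C m0 x)) => [[m0 hm0]|hn].
    exists m0.+1 => m hm; apply: (dis m0) => //; rewrite neq_ltn; apply/orP; right; exact: hm.
  by exists 0%N => m _ hm; apply: hn; exists m.
exists (maxn N Nx) => m hm y; rewrite in_cons => /orP[/eqP->|yS].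
  by apply: hNx; apply: leq_trans hm; apply: leq_maxr.
by apply: hN => //; apply: leq_trans hm; apply: leq_maxl.
Qed.

Lemma key (K : set ((X -> int) -> R)) : @tg_compact DG K ->
  exists F : seq X, forall chi, K chi -> supp chi F.
Proof.
move=> [Ksub Kcov]; apply: contrapT => hno.
have [ms hms] : {ms : ((X -> int) -> R) -> seq X & forall chi, CHI chi ->
    supp chi (ms chi) /\ forall a, a \in ms chi -> ~ supp chi [seq y <- ms chi | y != a]}.
  have h : forall chi, exists F : seq X, CHI chi ->
    supp chi F /\ forall a, a \in F -> ~ supp chi [seq y <- F | y != a].
    move=> chi; case: (pselect (CHI chi)) => hc.
      by have [F hF] := supp_min hc; exists F.
    by exists [::].
  exact: choice h.
pose A := [set a | exists2 chi, K chi & a \in ms chi].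
have iA : inf A.
  move=> s; apply: contrapT => hn; apply: hno; exists s => chi Kc.
  apply: (supp_sub (hms _ (Ksub _ Kc)).1) => a ams.
  apply: contrapT => /negP nas; apply: hn; exists a; split => //; by exists chi.
have [a [C hC']] := disj_seq hH hC iA.
have hb : forall m, exists p : ((X -> int) -> R) * (X -> int),
    [/\ K p.1, cont p.2, (forall x, ~ C m x -> p.2 x = 0) & ~ V0 (p.1 p.2)].
  move=> m; have [Am Cm oC cC _] := hC' m.
  have [chi Kc am] := Am.
  have [hs1 hs2] := hms _ (Ksub _ Kc).
  have [h [ch hO hV]] := bump (Ksub _ Kc) hs1 am (hs2 _ am) oC Cm.
  by exists (chi, h).
have [pf hpf] := choice hb.
pose chif := fun m => (pf m).1.
pose hs := fun m => (pf m).2.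
have dis : forall m m', m' != m -> forall x, C m x -> ~ C m' x.
  by move=> m; have [_ _ _ _ d] := hC' m.
have evt0 : forall x, exists M, forall m, (M <= m)%N -> hs m x = 0.
  move=> x; have [N hN] := evt_notin dis [:: x].
  exists N => m hm; have [_ _ hz _] := hpf m; apply: hz; apply: hN => //.
  by rewrite mem_head.
pose L := fun N => [set f : X -> int | f = (fun _ => 0) \/ exists2 m, (N <= m)%N & f = hs m].
have Lcomp : forall N, @tg_compact (Cp_Z X) (L N).
  move=> N; split.
    by move=> f [->|[m _ ->]]; [exact: cont_zf | have [] := hpf m].
  move=> Us hUs hcov.
  apply: (@seq_compact _ cont [set W | exists (x : X) (n : int), W = [set f | f x = n]]
     hs (fun _ => 0) N _ Us hUs (@cont_zf X) _ hcov).
  - move=> V [x [n ->]] /= n0; have [M hM] := evt0 x.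
    by exists M => m hm; rewrite hM.
  - by move=> m; have [] := hpf m.
pose O := fun N => [set chi : (X -> int) -> R | forall g, L N g -> V0 (chi g)].
have Oopen : forall N, tg_open DG (O N).
  move=> N; apply: gen_open_sub; exists (L N), V0; split => //; exact: V0_open.
have Omono : forall N N', (N <= N')%N -> O N `<=` O N'.
  move=> N N' hNN chi hc g [->|[m hm ->]]; apply: hc; [by left | right].
  by exists m => //; apply: leq_trans hm.
have Usopen : forall U, [set U | exists N, U = O N] U -> tg_open DG U.
  by move=> U [N ->]; apply: Oopen.
have Kcv : K `<=` \bigcup_(U in [set U | exists N, U = O N]) U.
  move=> chi Kc; have [hs1 _] := hms _ (Ksub _ Kc).
  have [N hN] := evt_notin dis (ms chi).
  exists (O N); first by exists N.
  move=> g [->|[m hm ->]]; first by rewrite (chi0 (Ksub _ Kc)); left; lra.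
  rewrite (hs1 (hs m)); [by left; lra | by have [] := hpf m |].
  move=> x xS; have [_ _ hz _] := hpf m; apply: hz; exact: hN.
have [Fs [finF subF covF]] := Kcov _ Usopen Kcv.
have [s hs_] := fin_list finF.
have [Ns hNs] : exists Ns, forall U, U \in s -> U `<=` O Ns.
  have : forall U, U \in s -> exists N, U = O N by move=> U /hs_ /subF.
  elim: s {hs_} => [|U s IH] hU; first by exists 0%N.
  have [N1 e1] := hU U (mem_head _ _).
  have [N2 h2] := IH (fun W Ws => hU W ltac:(by rewrite in_cons Ws orbT)).
  exists (maxn N1 N2) => W; rewrite in_cons => /orP[/eqP->|Ws].
    by rewrite e1; apply: Omono; apply: leq_maxl.
  by apply: subset_trans (h2 W Ws) _; apply: Omono; apply: leq_maxr.
have [KN _ _ bad] := hpf Ns.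
have [U FU Uc] := covF _ KN.
apply: bad; apply: (hNs U) => //; first by apply/hs_.
by right; exists Ns.
Qed.
End Key.
Section Real2.
Variable R : realType.

Lemma tfrac_sub_eq (a b : R) : tfrac a = tfrac b -> tfrac (a - b) = 0.
Proof.
move=> e.
have -> : a - b = (tfrac a - tfrac b) + (Num.floor a - Num.floor b)%:~R.
  by rewrite /tfrac intrB; ring.
by rewrite tfracDz e subrr tfrac0.
Qed.

Lemma half_int (d : int) : d != 0 -> tfrac (d%:~R * (2 * `|d|%:~R)^-1) = 1/2 :> R.
Proof.
move=> dn.
have hd : (`|d|%:~R : R) != 0 by rewrite intr_eq0 normr_eq0.
case: (ltrP 0 d) => hs.
  rewrite gtr0_norm // tfrac_id.
    by field; rewrite -(gtr0_norm hs).
  have -> : d%:~R * (2 * d%:~R)^-1 = 1/2 :> R by field; rewrite -(gtr0_norm hs).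
  by apply/andP; split; lra.
have hs' : d < 0 by rewrite lt_neqAle dn hs.
rewrite ltr0_norm // intrN.
have -> : d%:~R * (2 * - d%:~R)^-1 = - (1/2) :> R.
  by field; move: hd; rewrite ltr0_norm // intrN oppr_eq0.
rewrite -(tfracDz (- (1/2)) 1) tfrac_id; first by rewrite /=; lra.
by apply/andP; split; rewrite /=; lra.
Qed.

Lemma tdist0_tfrac (y : R) : `|y| < 1/2 -> tdist 0 (tfrac y) <= `|y|.
Proof.
move=> hy; rewrite /tdist sub0r normrN ge_min; apply/orP.
case: (lerP 0 y) => hs.
  left; rewrite tfrac_id ?ger0_norm //; apply/andP; split => //.
  by move: hy; rewrite ger0_norm //; lra.
right; rewrite -(tfracDz y 1) tfrac_id; last first.
  by move: hy; rewrite ltr0_norm //= => h; apply/andP; split; lra.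
rewrite ger0_norm /=; last by move: hy; rewrite ltr0_norm //; lra.
by rewrite ltr0_norm //; lra.
Qed.
End Real2.
Section CX.
Variable R : realType.
Variable X : topologicalType.
Local Notation cont := (@cont_Z X).
Local Notation CHI := (character R (Cp_Z X)).
Local Notation DG := (Dual R (Cp_Z X)).
Local Notation sbG := [set W | exists (x : X) (n : int), W = [set f : X -> int | f x = n]].

Lemma nbhd_list (F : seq X) (a : X -> int) : exists Fs : set (set (X -> int)),
  [/\ finite_set Fs, Fs `<=` sbG, (forall V, Fs V -> V a) &
      forall b, (forall V, Fs V -> V b) -> forall x, x \in F -> b x = a x].
Proof.
exists [set` [seq [set f : X -> int | f x = a x] | x <- F]]; split.
- exact: finite_seq.
- by move=> V /= /mapP[x _ ->]; exists x, (a x).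
- by move=> V /= /mapP[x _ ->].
- move=> b hb x xF; apply: (hb [set f : X -> int | f x = a x]) => /=.
  by apply/mapP; exists x.
Qed.

Definition cx (x : X) (t : R) : (X -> int) -> R :=
  fun g => if `[< cont g >] then tfrac ((g x)%:~R * t) else 0.

Lemma cxE x t g : cont g -> cx x t g = tfrac ((g x)%:~R * t).
Proof. by move=> cg; rewrite /cx; case: asboolP. Qed.

Lemma cx_char x t : CHI (cx x t).
Proof.
split.
- by move=> g cg; rewrite cxE //; apply: tfrac_inT.
- by move=> g ng; rewrite /cx; case: asboolP.
- move=> g h cg ch; rewrite /tadd !cxE //; last first.
    exact: (@cont_op2 _ (fun u v => u + v)).
  by rewrite tfracDl tfracDr intrD mulrDl.
- move=> U oU a ca Ua.
  have [Fs [fin sub inn imp]] := nbhd_list [:: x] a.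
  exists Fs; split => // b cb hb; rewrite /= cxE //.
  have := imp b hb x (mem_head _ _) => ->; by move: Ua; rewrite /= cxE.
Qed.

Lemma single_compact (G : tgroup) (g : tg_car G) : tg_set G g -> @tg_compact G [set g].
Proof.
move=> hg; split; first by move=> y ->.
move=> Us hUs hcov; have [U UsU Ug] := hcov g erefl.
exists [set U]; split; [exact: finite_set1 | by move=> V -> | by move=> y -> ; exists U].
Qed.

Lemma bounded_vals (L : set (X -> int)) x : @tg_compact (Cp_Z X) L ->
  exists B : nat, forall g, L g -> (`|g x| <= B)%N.
Proof.
move=> [Lsub Lcov].
have [Fs [finF subF covF]] := Lcov [set W | exists k : int, W = [set f : X -> int | f x = k]]
  ltac:(by move=> U [k ->]; apply: gen_open_sub; exists x, k)
  ltac:(by move=> g Lg; exists [set f : X -> int | f x = g x] => //; exists (g x)).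
have [s hs] := fin_list finF.
have [B hB] : exists B : nat, forall W, W \in s -> forall f, W f -> (`|f x| <= B)%N.
  have : forall W, W \in s -> exists k : int, W = [set f : X -> int | f x = k].
    by move=> W /hs /subF.
  elim: s {hs} => [|W s IH] hW; first by exists 0%N.
  have [k ek] := hW W (mem_head _ _).
  have [B2 h2] := IH (fun V Vs => hW V ltac:(by rewrite in_cons Vs orbT)).
  exists (maxn `|k|%N B2) => V; rewrite in_cons => /orP[/eqP->|Vs] f.
    by rewrite ek /= => ->; apply: leq_maxl.
  by move=> /(h2 V Vs) h; apply: leq_trans h (leq_maxr _ _).
exists B => g Lg; have [W FW Wg] := covF g Lg.
by apply: (hB W) => //; apply/hs.
Qed.
End CX.
Section QS.
Variable R : realType.
Variable X : topologicalType.
Local Notation cont := (@cont_Z X).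
Local Notation CHI := (character R (Cp_Z X)).
Local Notation DG := (Dual R (Cp_Z X)).
Local Notation E := (@evalE R (Cp_Z X)).

Definition ym (x : X) (m : nat) := @cx R X x (2 * m%:R)^-1.
Definition Kx x M := [set chi | chi = @cx R X x 0 \/ exists2 m, (M <= m)%N & chi = ym x m].

Lemma Kx_compact x M : @tg_compact DG (Kx x M).
Proof.
split; first by move=> chi [->|[m _ ->]]; apply: cx_char.
move=> Us hUs hcov.
suff hconv : forall V, @co_subbase R (Cp_Z X) V -> V (cx x 0) ->
    exists M0, forall m, (M0 <= m)%N -> V (ym x m).
  exact: (@seq_compact _ CHI (@co_subbase R (Cp_Z X)) (ym x) (cx x 0) M hconv Us hUs
   (@cx_char R X x 0) (fun m => @cx_char R X x _) hcov).
move=> V [L [U [hL oU ->]]] /= h0.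
have [B hB] := bounded_vals x hL.
case: (pselect (exists g, L g)) => [[g0 Lg0]|hno]; last first.
  by exists 0%N => m _ g Lg; exfalso; apply: hno; exists g.
have U0 : U 0.
  have := h0 g0 Lg0; rewrite cxE; last by case: hL => sub _; apply: sub.
  by rewrite mulr0 tfrac0.
have [e e0 he] := oU 0 ltac:(by apply/andP; split) U0.
set e' := Num.min e (1/2).
have e'0 : 0 < e' by rewrite lt_min e0 /=; lra.
have e'1 : e' <= e by rewrite ge_min lexx.
have e'2 : e' <= 1/2 by rewrite ge_min lexx orbT.
set c : R := B%:R.
have c0 : 0 <= c by rewrite /c ler0n.
pose M' := (Num.Def.archi_bound (c / e')).+1.
exists M' => m hm g Lg.
have cg : cont g by case: hL => sub _; apply: sub.
rewrite /ym cxE //.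
have hm0 : (0 : R) < m%:R by rewrite ltr0n; apply: leq_trans hm.
have hb := @archi_boundP _ (c / e') ltac:(by apply: divr_ge0 => //; apply: ltW).
have hmb : (Num.Def.archi_bound (c / e'))%:R < (m%:R : R) by rewrite ltr_nat.
have hce : c < m%:R * e'.
  by rewrite -ltr_pdivrMr //; apply: lt_trans hb hmb.
have hgx : `|(g x)%:~R| <= c :> R.
  by rewrite -intr_norm -natr_absz /c ler_nat; apply: hB.
have hy : `|(g x)%:~R * (2 * m%:R)^-1| < e' :> R.
  have h2m : (0 : R) < 2 * m%:R by apply: mulr_gt0 => //; lra.
  rewrite normrM normfV (gtr0_norm h2m) ltr_pdivrMr //.
  have : 0 <= m%:R * e' :> R by apply: mulr_ge0; apply: ltW.
  move: hce hgx; set P := m%:R * e'; move=> *.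
  have -> : e' * (2 * m%:R) = 2 * P by rewrite /P; ring.
  lra.
apply: he; first exact: tfrac_inT.
apply: le_lt_trans (tdist0_tfrac _) _; first lra.
lra.
Qed.
End QS.
Arguments ym {R X}.
Arguments Kx {R X}.
Section QS2.
Variable R : realType.
Variable X : topologicalType.
Local Notation cont := (@cont_Z X).
Local Notation CHI := (character R (Cp_Z X)).
Local Notation DG := (Dual R (Cp_Z X)).
Local Notation E := (@evalE R (Cp_Z X)).

Lemma T_open_neq (c : R) : in_T c -> T_open [set r : R | r <> c].
Proof.
move=> /andP[c0 c1] t /andP[t0 t1] tc.
exists (tdist t c).
  rewrite /tdist lt_min; apply/andP; split.
    by rewrite normr_gt0 subr_eq0; apply/eqP.
  case: (lerP 0 (t - c)) => h; [rewrite ger0_norm // | rewrite ltr0_norm //]; lra.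
by move=> s _ hs sc; move: hs; rewrite sc ltxx.
Qed.

Lemma evalE_chi g chi : CHI chi -> E g chi = chi g.
Proof. by move=> hc; rewrite /evalE; case: asboolP. Qed.

Definition tk (n k : int) : R := (2 * `|n - k|%:~R)^-1.
Definition Q0 x M := [set Phi : ((X -> int) -> R) -> R |
  forall chi, Kx x M chi -> [set r : R | r <> 1/2] (Phi chi)].
Definition Qk x n k := [set Phi : ((X -> int) -> R) -> R |
  forall chi, [set @cx R X x (tk n k)] chi -> [set r : R | r <> tfrac (k%:~R * tk n k)] (Phi chi)].
Definition ks (n : int) : seq int :=
  [seq k <- [seq (i%:Z - (absz n)%:Z) | i <- iota 0 (2 * absz n).+1] | k != n].
Definition Qs x n := Q0 x (absz n).+1 :: [seq Qk x n k | k <- ks n].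

Lemma Qs_sub x n Q : Q \in Qs x n -> @co_subbase R DG Q.
Proof.
rewrite in_cons => /orP[/eqP->|/mapP[k _ ->]].
  exists (Kx x (absz n).+1), [set r : R | r <> 1/2]; split => //.
    exact: Kx_compact.
  by apply: T_open_neq; apply/andP; split; lra.
exists [set @cx R X x (tk n k)], [set r : R | r <> tfrac (k%:~R * tk n k)]; split => //.
  by apply: single_compact; apply: cx_char.
by apply: T_open_neq; apply: tfrac_inT.
Qed.

Lemma Qs_in g x n : cont g -> g x = n -> forall Q, Q \in Qs x n -> Q (E g).
Proof.
move=> cg gn Q; rewrite in_cons => /orP[/eqP->|/mapP[k kk ->]].
  move=> chi [->|[m hm ->]] /=.
    rewrite evalE_chi; last exact: cx_char.
    rewrite cxE // mulr0 tfrac0 => h.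
    have : (0:R) < 1/2 by lra.
    by rewrite -h ltxx.
  rewrite /ym evalE_chi; last exact: cx_char.
  rewrite cxE //.
  apply/eqP; apply: tfrac_half_small; rewrite gn.
  have hm0 : (0 : R) < m%:R by rewrite ltr0n; apply: leq_trans hm.
  have h2m : (0 : R) < 2 * m%:R by apply: mulr_gt0 => //; lra.
  rewrite normrM normfV (gtr0_norm h2m) ltr_pdivrMr //.
  have : `|n%:~R| < m%:R :> R by rewrite -intr_norm -natr_absz ltr_nat.
  lra.
move=> chi -> /=; rewrite evalE_chi; last exact: cx_char.
rewrite cxE // gn => e.
have kn : k != n by move: kk; rewrite mem_filter => /andP[].
have := tfrac_sub_eq e.
rewrite -mulrBl -intrB /tk half_int; first lra.
by rewrite subr_eq0 eq_sym.
Qed.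

Lemma Qs_out g x n : cont g -> (forall Q, Q \in Qs x n -> Q (E g)) -> g x = n.
Proof.
move=> cg hQ.
have h0 := hQ _ (mem_head _ _).
set k := g x.
have kb : (absz k <= absz n)%N.
  rewrite leqNgt; apply/negP => hk.
  have := h0 (ym x (absz k)) (or_intror (ex_intro2 _ _ (absz k) hk erefl)).
  rewrite /= /ym evalE_chi; last exact: cx_char.
  rewrite cxE // -/k natr_absz half_int //.
  by apply/eqP => k0; move: hk; rewrite k0.
apply/eqP; apply: contraT => kn.
have kin : k \in ks n.
  rewrite mem_filter kn andTb; apply/mapP; exists (absz (k + (absz n)%:Z)).
    rewrite mem_iota add0n; move: kb; lia.
  move: kb; lia.
have := hQ (Qk x n k) ltac:(by rewrite in_cons; apply/orP; right; apply/mapP; exists k).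
move=> /(_ (cx x (tk n k)) erefl); rewrite /= evalE_chi; last exact: cx_char.
by rewrite cxE.
Qed.
End QS2.
Arguments Qs {R X}.
Arguments Q0 {R X}.
Arguments Qk {R X}.
Arguments tk {R}.
Section MainSec.
Variable R : realType.
Variable X : topologicalType.
Hypothesis hH : hausdorff_space X.
Hypothesis hC : clopen_base_space X.
Local Notation cont := (@cont_Z X).
Local Notation CHI := (character R (Cp_Z X)).
Local Notation DG := (Dual R (Cp_Z X)).
Local Notation E := (@evalE R (Cp_Z X)).

Lemma char_sum chi psi : CHI chi -> CHI psi -> CHI (fun h => tadd (chi h) (psi h)).
Proof.
move=> hc hp; split.
- by move=> g _; apply: tfrac_inT.
- move=> g ng; have [_ o1 _ _] := hc; have [_ o2 _ _] := hp.
  by rewrite /tadd o1 // o2 // addr0 tfrac0.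
- move=> g h cg ch; rewrite (chi_add hc cg ch) (chi_add hp cg ch) /tadd.
  by rewrite !tfracDl !tfracDr; congr tfrac; ring.
- move=> U oU a ca Ua.
  have [F1 h1] := supp_exists hc; have [F2 h2] := supp_exists hp.
  have [Fs [fin sub inn imp]] := nbhd_list (F1 ++ F2) a.
  exists Fs; split => // b cb hb; rewrite /=.
  have e1 : chi b = chi a.
    by apply: (supp_agree hc h1 cb ca) => x xF; apply: (imp b hb); rewrite mem_cat xF.
  have e2 : psi b = psi a.
    by apply: (supp_agree hp h2 cb ca) => x xF; apply: (imp b hb); rewrite mem_cat xF orbT.
  by rewrite e1 e2.
Qed.

Lemma evalE_char g : cont g -> character R DG (E g).
Proof.
move=> cg; split.
- by move=> chi hc; rewrite evalE_chi //; apply: chi_itv.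
- by move=> chi nc; rewrite /evalE; case: asboolP.
- move=> chi psi hc hp; rewrite /= !evalE_chi //; exact: char_sum.
- move=> U oU chi hc Uc.
  exists [set [set psi : (X -> int) -> R | forall h, [set g] h -> U (psi h)]]; split.
  + exact: finite_set1.
  + move=> V ->; exists [set g], U; split => //; exact: single_compact.
  + by move=> V -> h ->; move: Uc; rewrite /= evalE_chi.
  + by move=> b hb /(_ _ erefl) /(_ g erefl); rewrite /= evalE_chi.
Qed.

Lemma list_agree (f0 : X -> int) (s : seq (set (((X -> int) -> R) -> R))) :
  (forall V, V \in s -> exists F : seq X, forall f, cont f ->
      (forall x, x \in F -> f x = f0 x) -> V (E f)) ->
  exists F : seq X, forall f, cont f -> (forall x, x \in F -> f x = f0 x) ->
      forall V, V \in s -> V (E f).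
Proof.
elim: s => [|V s IH] hV; first by exists [::].
have [F1 h1] := hV V (mem_head _ _).
have [F2 h2] := IH (fun W Ws => hV W ltac:(by rewrite in_cons Ws orbT)).
exists (F1 ++ F2) => f cf hf W; rewrite in_cons => /orP[/eqP->|Ws].
  by apply: h1 => // x xF; apply: hf; rewrite mem_cat xF.
by apply: h2 => // x xF; apply: hf; rewrite mem_cat xF orbT.
Qed.

Lemma evalE_cont W : tg_open (Dual R DG) W -> tg_open (Cp_Z X) (E @^-1` W).
Proof.
move=> oW f0 c0 Wf0.
have [Fs [fin sub inn imp]] := oW (E f0) (evalE_char c0) Wf0.
have [s hs] := fin_list fin.
have hsV : forall V, V \in s -> exists F : seq X, forall f, cont f ->
    (forall x, x \in F -> f x = f0 x) -> V (E f).
  move=> V /hs FV; have [K [U [hK oU eV]]] := sub V FV.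
  have [F hF] := key hH hC hK.
  exists F => f cf hf; rewrite eV => chi Kc.
  have hc : CHI chi by case: hK => ks _; apply: ks.
  have := inn V FV; rewrite eV => /(_ chi Kc).
  rewrite !evalE_chi // (supp_agree hc (hF chi Kc) cf c0) //.
have [F hF] := list_agree hsV.
have [Fs' [fin' sub' inn' imp']] := nbhd_list F f0.
exists Fs'; split => // b cb hb; rewrite /=.
apply: imp; first exact: evalE_char.
by move=> V /hs Vs; apply: hF => //; apply: imp'.
Qed.

Lemma pairs_list (g : X -> int) (s0 : seq (set (X -> int))) :
  (forall V, V \in s0 -> exists x n, V = [set f : X -> int | f x = n] /\ V g) ->
  exists s : seq (X * int), (forall p, p \in s -> g p.1 = p.2) /\
    forall b, (forall p, p \in s -> b p.1 = p.2) -> forall V, V \in s0 -> V b.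
Proof.
elim: s0 => [|V s0 IH] hV; first by exists [::].
have [x [n [eV Vg]]] := hV V (mem_head _ _).
have [s [h1 h2]] := IH (fun W Ws => hV W ltac:(by rewrite in_cons Ws orbT)).
exists ((x, n) :: s); split.
  move=> p; rewrite in_cons => /orP[/eqP->|ps]; last exact: h1.
  by move: Vg; rewrite eV.
move=> b hb W; rewrite in_cons => /orP[/eqP->|Ws].
  by rewrite eV /=; apply: (hb (x, n)); rewrite mem_head.
by apply: h2 => // p ps; apply: hb; rewrite in_cons ps orbT.
Qed.

Lemma evalE_open U : tg_open (Cp_Z X) U ->
  exists2 W, tg_open (Dual R DG) W & forall g, cont g -> (U g <-> W (E g)).
Proof.
move=> oU.
pose W := fun Phi : ((X -> int) -> R) -> R => exists s : seq (X * int),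
  (forall b, cont b -> (forall p, p \in s -> b p.1 = p.2) -> U b) /\
  (forall p, p \in s -> forall Q, Q \in Qs p.1 p.2 -> Q Phi).
exists W.
  move=> Phi hPhi [s [h1 h2]].
  exists [set` flatten [seq Qs p.1 p.2 | p <- s]]; split.
  - exact: finite_seq.
  - by move=> Q /= /flattenP[qs /mapP[p ps ->] Qq]; apply: Qs_sub Qq.
  - by move=> Q /= /flattenP[qs /mapP[p ps ->] Qq]; apply: h2 Qq.
  - move=> Psi hPsi hall; exists s; split => // p ps Q Qq.
    by apply: hall => /=; apply/flattenP; exists (Qs p.1 p.2) => //; apply/mapP; exists p.
move=> g cg; split.
  move=> Ug; have [Fs [fin sub inn imp]] := oU g cg Ug.
  have [s0 hs0] := fin_list fin.
  have [s [h1 h2]] := @pairs_list g s0 ltac:(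
    move=> V /hs0 FV; have [x [n eV]] := sub V FV; exists x, n; split => //; exact: inn).
  exists s; split.
    by move=> b cb hb; apply: imp => // V /hs0; apply: h2.
  by move=> p ps Q Qq; apply: Qs_in Qq => //; apply: h1.
move=> [s [h1 h2]]; apply: h1 => // p ps.
apply: (@Qs_out R X g p.1 p.2 cg) => Q Qq; exact: (h2 p ps Q Qq).
Qed.
End MainSec.

Theorem proposition6p5 (R : realType) (X : topologicalType) :
  hausdorff_space X -> completely_regular_space X ->
  clopen_base_space X -> N_compact X -> ~ measurable_cardinality X ->
  top_iso_onto_image (@evalE R (Cp_Z X)).
Proof.
move=> hH _ hC _ _; split.
- by move=> g cg; apply: evalE_char.
- move=> g h cg ch; apply: funext => chi /=.
  rewrite /evalE; case: asboolP => hc.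
    by have [_ _ hom _] := hc; apply: hom.
  by rewrite /tadd addr0 tfrac0.
- move=> g h cg ch e; apply: funext => x.
  apply/esym; apply: (@Qs_out R X h x (g x) ch) => Q Qq.
  rewrite -e; exact: (Qs_in cg erefl Qq).
- by move=> W oW; apply: evalE_cont.
- by move=> U oU; apply: evalE_open.
Qed.
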